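(* Let $Q\subseteq\mathbb{R}^2$ be a convex polygon such that $\tau Q\subseteq Q^{\circ}$. Then the area of $Q^{\circ}$ is at least $3$.
   Context: $\tau:\mathbb{R}^2\to\mathbb{R}^2$ denotes the $90^\circ$ counterclockwise rotation. For a nonempty compact convex set $Q\subseteq\mathbb{R}^2$, its polar is $Q^{\circ}=\{x\in\mathbb{R}^2: y^\top x\le 1 \text{ for all } y\in Q\}$. *)

(* Defs.v *)
From mathcomp Require Import all_boot all_order all_algebra.
From mathcomp Require Import all_classical all_reals all_analysis.
Set Implicit Arguments. Unset Strict Implicit. Unset Printing Implicit Defensive.
Import Order.TTheory GRing.Theory Num.Theory.
Local Open Scope classical_set_scope.
Local Open Scope ring_scope.

Section Defs.
Context {R : realType}.

Definition dot2 (p q : R * R) : R := p.1 * q.1 + p.2 * q.2.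

(* tau : the 90-degree counterclockwise rotation. *)
Definition rot90 (p : R * R) : R * R := (- p.2, p.1).

Definition polar (Q : set (R * R)) : set (R * R) :=
  [set x | forall y, Q y -> dot2 y x <= 1].

Definition conv_hull (n : nat) (v : 'I_n -> R * R) : set (R * R) :=
  [set x | exists l : 'I_n -> R,
     [/\ forall i, 0 <= l i, \sum_(i < n) l i = 1 &
         x = (\sum_(i < n) l i * (v i).1, \sum_(i < n) l i * (v i).2)]].

Definition det2 (p q : R * R) : R := p.1 * q.2 - p.2 * q.1.

(* A convex polygon: convex hull of finitely many points, not all collinear
   (so that it is a genuine two-dimensional polygon). *)
Definition convex_polygon (Q : set (R * R)) : Prop :=
  exists (n : nat) (v : 'I_n -> R * R),
    Q = conv_hull v /\
    exists i j k : 'I_n,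
      det2 ((v j).1 - (v i).1, (v j).2 - (v i).2)
           ((v k).1 - (v i).1, (v k).2 - (v i).2) != 0.

Definition area (A : set (R * R)) : \bar R :=
  ((@lebesgue_measure R) \x (@lebesgue_measure R))%E A.

End Defs.

(* Main.v *)
Require Import Defs.
From HB Require Import structures.
From mathcomp Require Import all_boot all_order all_algebra.
From mathcomp Require Import all_classical all_reals all_analysis.
From mathcomp Require Import ring lra.
Set Implicit Arguments. Unset Strict Implicit. Unset Printing Implicit Defensive.
Import Order.TTheory GRing.Theory Num.Theory.
Local Open Scope classical_set_scope.
Local Open Scope ring_scope.


Section S.
Context {R : realType}.
Local Notation mu := (@lebesgue_measure R).

Lemma shiftE (t : R) (A : set R) : measurable A -> mu [set x | A (x + t)] = mu A.
Proof.
move=> mA.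
pose f : measurableTypeR R -> measurableTypeR R := fun x => x + t.
have mf : measurable_fun setT f by apply: measurable_realfun.measurable_funD.
have := @lebesgue_measure_unique R (pushforward mu f).
move=> H; rewrite -[LHS]/(pushforward mu f A) -H //.
move=> _ [[a b]] _ <-; rewrite /pushforward /=.
transitivity (mu `]a - t, b - t]%classic); last first.
  congr (mu _); apply/seteqP; split => x /=; rewrite /f !in_itv /= ltrBlDr lerBrDr //.
rewrite !lebesgue_measure_itv /= !lte_fin ltrD2r.
by case: ifP => // _; rewrite -!EFinD; congr (_%:E); rewrite opprB addrA subrK addrC.
Qed.

Lemma scaleE_pos (k : R) (A : set R) : 0 < k -> measurable A ->
  (k%:E * mu [set x | A (k * x)%R] = mu A)%E.
Proof.
move=> k0 mA.
pose f : measurableTypeR R -> measurableTypeR R := fun x => k * x.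
have mf : measurable_fun setT f by apply: measurable_realfun.measurable_funM.
pose kk : {nonneg R} := NngNum (ltW k0).
have H := @lebesgue_measure_unique R (mscale kk (pushforward mu f)).
have E := H mf.
rewrite [RHS]E //.
move=> _ [[a b]] _ <-; rewrite /mscale /pushforward /=.
transitivity (k%:E * mu `](a / k)%R, (b / k)%R]%classic)%E; last first.
  congr (_ * mu _)%E; apply/seteqP; split => x /=; rewrite /f !in_itv /=.
    by rewrite ltr_pdivrMr // ler_pdivlMr // ![x * k]mulrC.
  by rewrite ltr_pdivrMr // ler_pdivlMr // ![x * k]mulrC.
rewrite !lebesgue_measure_itv /= !lte_fin ltr_pM2r ?invr_gt0 //.
case: ifP => _; last by rewrite mule0.
rewrite -!EFinD -EFinM; congr (_%:E); field; exact: lt0r_neq0.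
Qed.

Lemma negE (A : set R) : measurable A -> mu [set x | A (- x)] = mu A.
Proof. move=> mA; exact: (lebesgue_measureN mA). Qed.

Definition area' := (@area R).

Lemma area_vshear (c : R) (X : set (R * R)) : measurable X ->
  area [set z | X (z.1, z.2 + c * z.1)] = area X.
Proof.
move=> mX; rewrite /area /product_measure1 /=.
apply: eq_integral => x _ /=.
rewrite -(@shiftE (c * x) (xsection X x)); last exact: measurable_xsection.
congr (mu _); apply/seteqP; split => y /=; rewrite /xsection /= !inE //.
Qed.


Local Notation M2 := (measurableTypeR R * measurableTypeR R)%type.
Lemma mpre (L : M2 -> M2) (X : set M2) :
  measurable_fun setT L -> measurable X -> measurable [set z | X (L z)].
Proof. by move=> mL mX; rewrite -[X in measurable X]setTI; exact: mL. Qed.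

Lemma mlin (a b : R) : measurable_fun setT (fun z : M2 => a * z.1 + b * z.2).
Proof.
by apply: measurable_realfun.measurable_funD; apply: measurable_realfun.measurable_funM.
Qed.

Lemma mlin2 (a b c d : R) :
  measurable_fun setT (fun z : M2 => (a * z.1 + b * z.2, c * z.1 + d * z.2) : M2).
Proof. by apply: measurable_fun_pair; exact: mlin. Qed.

Lemma area_vscale (k : R) (X : set M2) : 0 < k -> measurable X ->
  (k%:E * area [set z | X (z.1, (k * z.2)%R)] = area X)%E.
Proof.
move=> k0 mX.
have mP : measurable [set z : M2 | X (z.1, k * z.2)].
  have := @mpre (fun z : M2 => (1 * z.1 + 0 * z.2, 0 * z.1 + k * z.2)) X (mlin2 _ _ _ _) mX.
  by congr measurable; apply/seteqP; split => z /=; rewrite !mul1r !mul0r addr0 add0r.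
rewrite /area /product_measure1 /=.
rewrite -ge0_integralZl //. all: try (by rewrite lee_fin ltW). all: try exact: measurable_fun_xsection.
under [RHS]eq_integral => x _.
  rewrite -(@scaleE_pos k (xsection X x)) //; last exact: measurable_xsection.
  over.
by congr (integral _ _ _); apply/funext => x /=.
Qed.

Lemma area_vneg (X : set (R * R)) : measurable X ->
  area [set z | X (z.1, - z.2)] = area X.
Proof.
move=> mX; rewrite /area /product_measure1 /=.
apply: eq_integral => x _ /=.
rewrite -(@negE (xsection X x)); last exact: measurable_xsection.
congr (mu _); apply/seteqP; split => y /=; rewrite /xsection /= !inE //.
Qed.


Lemma area_swap (X : set M2) : measurable X ->
  area [set z | X (z.2, z.1)] = area X.
Proof.
move=> mX.
have -> : area X = (mu \x^ mu)%E X.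
  rewrite /area; apply: product_measure_unique => //= A B mA mB.
  by rewrite product_measure2E.
rewrite /area /product_measure1 /product_measure2 /=.
by congr (integral _ _ _); apply/funext => x /=; congr (mu _); apply/seteqP; split => y;
  rewrite /xsection /ysection /= !inE.
Qed.


Definition good (L : M2 -> M2) (d : R) := measurable_fun setT L /\
  forall X : set M2, measurable X -> (`|d|%:E * area [set z | X (L z)] = area X)%E.

Lemma good_comp L1 d1 L2 d2 : good L1 d1 -> good L2 d2 -> good (L2 \o L1) (d1 * d2).
Proof.
move=> [m1 h1] [m2 h2]; split; first exact: measurableT_comp.
move=> X mX; have mY := mpre m2 mX.
rewrite normrM EFinM (muleC `|d1|%:E) -muleA.
have -> : area [set z | X ((L2 \o L1) z)] = area [set z | [set w | X (L2 w)] (L1 z)] by [].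
by rewrite h1 // h2.
Qed.

Lemma good_ext L L' d : (forall z, L z = L' z) -> good L d -> good L' d.
Proof. by move=> e; have -> : L = L' by apply/funext. Qed.

Lemma goodV c : good (fun z : M2 => (z.1, z.2 + c * z.1) : M2) 1.
Proof.
split.
  apply: measurable_fun_pair; first exact: measurable_fst.
  by apply: measurable_realfun.measurable_funD => //; apply: measurable_realfun.measurable_funM.
by move=> X mX; rewrite normr1 mul1e area_vshear.
Qed.

Lemma goodSp k : 0 < k -> good (fun z : M2 => (z.1, k * z.2) : M2) k.
Proof.
move=> k0; split.
  apply: measurable_fun_pair; first exact: measurable_fst.
  by apply: measurable_realfun.measurable_funM.
by move=> X mX; rewrite gtr0_norm // area_vscale.
Qed.

Lemma goodN : good (fun z : M2 => (z.1, - z.2) : M2) (-1).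
Proof.
split.
  apply: measurable_fun_pair; first exact: measurable_fst.
  by apply: measurable_realfun.measurable_funN.
by move=> X mX; rewrite normrN normr1 mul1e area_vneg.
Qed.

Lemma goodW : good (fun z : M2 => (z.2, z.1) : M2) (-1).
Proof.
split; first exact: measurable_swap.
by move=> X mX; rewrite normrN normr1 mul1e area_swap.
Qed.

Lemma goodS k : k != 0 -> good (fun z : M2 => (z.1, k * z.2) : M2) k.
Proof.
move=> k0; have [kp|kn] := ltP 0 k; first exact: goodSp.
have kn' : 0 < - k by rewrite oppr_gt0 lt_neqAle k0.
have := good_comp (goodSp kn') goodN.
rewrite mulrN1 opprK; apply: good_ext => z /=.
by rewrite mulNr opprK.
Qed.

Lemma goodH c : good (fun z : M2 => (z.1 + c * z.2, z.2) : M2) 1.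
Proof.
have := good_comp (good_comp goodW (goodV c)) goodW.
rewrite mulN1r mulrN1 opprK; apply: good_ext => z //.
Qed.

Lemma goodK k : k != 0 -> good (fun z : M2 => (k * z.1, z.2) : M2) k.
Proof.
move=> k0; have := good_comp (good_comp goodW (goodS k0)) goodW.
rewrite mulN1r mulrN1 opprK; apply: good_ext => z //.
Qed.

Lemma good_lin (a b c d : R) : a * d - b * c != 0 ->
  good (fun z : M2 => (a * z.1 + b * z.2, c * z.1 + d * z.2) : M2) (a * d - b * c).
Proof.
move=> D0.
have gen : forall a b c d : R, a != 0 -> a * d - b * c != 0 ->
    good (fun z : M2 => (a * z.1 + b * z.2, c * z.1 + d * z.2) : M2) (a * d - b * c).
  move=> {D0 a b c d} a b c d a0 D0.
  have h := good_comp (good_comp (good_comp (goodH (b / a)) (goodK a0))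
    (goodS (mulf_neq0 D0 (invr_neq0 a0)))) (goodV (c / a)).
  have -> : a * d - b * c = 1 * a * ((a * d - b * c) / a) * 1 by field.
  apply: good_ext h => z /=; congr pair; field => //.
have [a0|a0] := eqVneq a 0; last exact: gen.
subst a.
have b0 : b != 0 by apply: contraNneq D0 => ->; rewrite !mul0r subr0.
have e : (0 + b) * d - b * (c + d) = 0 * d - b * c by ring.
have b0' : 0 + b != 0 by rewrite add0r.
have Dn : (0 + b) * d - b * (c + d) != 0 by rewrite e.
have := good_comp (goodV (-1)) (gen _ _ _ _ b0' Dn).
rewrite e mul1r; apply: good_ext => z /=.
congr pair; ring.
Qed.

Lemma lin_area (a b c d : R) (X : set M2) : a * d - b * c != 0 -> measurable X ->
  (`|a * d - b * c|%:E * area [set z : M2 | X ((a * z.1 + b * z.2)%R, (c * z.1 + d * z.2)%R)] = area X)%E.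
Proof. by move=> D0 mX; have [_ h] := good_lin D0; exact: h. Qed.

End S.


Section S4.
Context {R : realType}.
Local Notation mu := (@lebesgue_measure R).
Local Notation M2 := (measurableTypeR R * measurableTypeR R)%type.

Lemma mhalf_le (a b c : R) : measurable [set z : M2 | a * z.1 + b * z.2 <= c].
Proof.
have := @mlin R a b measurableT (`]-oo, c]%classic) (measurable_itv _).
by rewrite setTI; congr measurable; apply/seteqP; split => z /=; rewrite in_itv.
Qed.

Lemma mhalf_lt (a b c : R) : measurable [set z : M2 | a * z.1 + b * z.2 < c].
Proof.
have := @mlin R a b measurableT (`]-oo, c[%classic) (measurable_itv _).
by rewrite setTI; congr measurable; apply/seteqP; split => z /=; rewrite in_itv.
Qed.

End S4.


Section S5.
Context {R : realType}.
Local Notation mu := (@lebesgue_measure R).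
Local Notation M2 := (measurableTypeR R * measurableTypeR R)%type.

Definition A0 : set M2 := [set z | 0 <= z.2 /\ z.2 < z.1 /\ z.1 <= 1].
Definition B0 : set M2 := [set z | 0 <= z.1 /\ z.1 < z.2 /\ z.2 <= 1].
Definition D0 : set M2 := [set z | 0 <= z.1 /\ z.1 <= 1 /\ z.2 = z.1].
Definition Sq : set M2 := `[0, 1]%classic `*` `[0, 1]%classic.

Lemma mA0 : measurable A0.
Proof.
have -> : A0 = [set z : M2 | 0 * z.1 + (-1) * z.2 <= 0] `&`
  ([set z : M2 | (-1) * z.1 + 1 * z.2 < 0] `&` [set z : M2 | 1 * z.1 + 0 * z.2 <= 1]).
  apply/seteqP; split => z /=.
    move=> [h1 [h2 h3]]; split; [|split]; lra.
  move=> [h1 [h2 h3]]; split; [|split]; lra.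
by apply: measurableI; [exact: mhalf_le | apply: measurableI; [exact: mhalf_lt | exact: mhalf_le]].
Qed.


Lemma mB0 : measurable B0.
Proof.
have -> : B0 = [set z : M2 | (-1) * z.1 + 0 * z.2 <= 0] `&`
  ([set z : M2 | 1 * z.1 + (-1) * z.2 < 0] `&` [set z : M2 | 0 * z.1 + 1 * z.2 <= 1]).
  apply/seteqP; split => z /=.
    move=> [h1 [h2 h3]]; split; [|split]; lra.
  move=> [h1 [h2 h3]]; split; [|split]; lra.
by apply: measurableI; [exact: mhalf_le | apply: measurableI; [exact: mhalf_lt | exact: mhalf_le]].
Qed.

Lemma mD0 : measurable D0.
Proof.
have -> : D0 = [set z : M2 | (-1) * z.1 + 0 * z.2 <= 0] `&`
  ([set z : M2 | 1 * z.1 + 0 * z.2 <= 1] `&`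
   ([set z : M2 | (-1) * z.1 + 1 * z.2 <= 0] `&` [set z : M2 | 1 * z.1 + (-1) * z.2 <= 0])).
  apply/seteqP; split => z /=.
    move=> [h1 [h2 h3]]; split; [|split; [|split]]; lra.
  move=> [h1 [h2 [h3 h4]]]; split; [|split]; lra.
apply: measurableI; first exact: mhalf_le.
apply: measurableI; first exact: mhalf_le.
by apply: measurableI; exact: mhalf_le.
Qed.

Lemma areaU (A B : set M2) : measurable A -> measurable B -> A `&` B = set0 ->
  area (A `|` B) = (area A + area B)%E.
Proof. by move=> mA mB d; rewrite /area measureU. Qed.

Lemma area_le (A B : set M2) : measurable A -> measurable B -> A `<=` B ->
  (area A <= area B)%E.
Proof. by move=> mA mB s; rewrite /area; apply: le_measure; rewrite ?inE. Qed.

Lemma areaSq : area Sq = 1%E.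
Proof.
rewrite /area /Sq product_measure1E; try exact: measurable_itv.
transitivity (mu `[0%R, 1%R]%classic * mu `[0%R, 1%R]%classic)%E; first by [].
by rewrite lebesgue_measure_itv /= lte_fin ltr01 -EFinD subr0 mule1.
Qed.

Lemma areaD0 : area D0 = 0%E.
Proof.
rewrite /area /product_measure1 /=.
transitivity (\int[mu]_x (cst 0%E x))%E; last exact: integral0.
apply: eq_integral => x _ /=.
apply/eqP; rewrite eq_le measure_ge0 andbT.
rewrite -(lebesgue_measure_set1 x).
apply: le_measure; rewrite ?inE //; first exact: measurable_xsection mD0.
by move=> y; rewrite /xsection /= inE => -[_ [_ e]]; exact: e.
Qed.

Lemma areaB0 : area B0 = area A0.
Proof.
rewrite -(area_swap mA0).
by congr area; apply/seteqP; split => z /=.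
Qed.

Lemma areaA0 : area A0 = (1 / 2 : R)%:E.
Proof.
have dA : A0 `&` (B0 `|` D0) = set0.
  apply/seteqP; split => z //= [[h1 [h2 h3]]] [[g1 [g2 g3]]|[g1 [g2 g3]]]; exfalso; lra.
have dB : B0 `&` D0 = set0.
  clear dA; apply/seteqP; split => z //= [[h1 [h2 h3]] [g1 [g2 g3]]]; exfalso; lra.
have eS : Sq = A0 `|` (B0 `|` D0).
  clear dA dB; apply/seteqP; split => z /=.
    rewrite /Sq /= !in_itv /= => -[/andP[h1 h2] /andP[h3 h4]].
    have [l|l] := ltP z.2 z.1; first by left; split; [|split]; lra.
    right; rewrite le_eqVlt in l; case/orP: l => [/eqP e|l]; [right|left]; (split; [|split]); lra.
  rewrite /Sq /= !in_itv /=.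
  move=> [[h1 [h2 h3]]|[[h1 [h2 h3]]|[h1 [h2 h3]]]]; split; apply/andP; split; lra.
have := areaSq; rewrite eS areaU; [|exact: mA0|by apply: measurableU; [exact: mB0|exact: mD0]|done].
rewrite areaU; [|exact: mB0|exact: mD0|done].
rewrite areaB0 areaD0 adde0.
have : (0 <= area A0)%E by apply: measure_ge0.
case: (area A0) => [r| |] //= _.
move=> /eqP; rewrite -EFinD eqe => /eqP h; congr (_%:E); lra.
Qed.

End S5.


Section S6.
Context {R : realType}.
Local Notation mu := (@lebesgue_measure R).
Local Notation M2 := (measurableTypeR R * measurableTypeR R)%type.

Definition tri (p q : R * R) : set M2 :=
  [set z | 0 <= det2 p z /\ 0 < det2 z q /\ det2 p z + det2 z q <= det2 p q].

Lemma tri_empty p q : det2 p q <= 0 -> tri p q = set0.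
Proof.
move=> h; apply/seteqP; split => z //= [h1 [h2 h3]]; exfalso; lra.
Qed.

Lemma area_tri p q : 0 < det2 p q -> area (tri p q) = (det2 p q / 2)%:E.
Proof.
move=> D0; set D := det2 p q in D0 *.
have Dn : D != 0 by rewrite gt_eqF.
set a := (q.2 - p.2) / D; set b := - (q.1 - p.1) / D.
set c := - p.2 / D; set d := p.1 / D.
have hD : a * d - b * c = 1 / D.
  rewrite /a /b /c /d /D /det2; field; exact: Dn.
have e : tri p q = [set z : M2 | A0 (a * z.1 + b * z.2, c * z.1 + d * z.2)].
  apply/seteqP; split => z /=.
  - move=> [h1 [h2 h3]].
    have e1 : c * z.1 + d * z.2 = det2 p z / D by rewrite /c /d /det2; field.
    have e2 : a * z.1 + b * z.2 = (det2 p z + det2 z q) / D by rewrite /a /b /det2; field.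
    rewrite /A0 /= e1 e2; split; [|split].
    + by apply: divr_ge0 => //; exact: ltW.
    + by rewrite ltr_pM2r ?invr_gt0 //; lra.
    + by rewrite ler_pdivrMr // mul1r.
  - rewrite /A0 /=.
    have e1 : c * z.1 + d * z.2 = det2 p z / D by rewrite /c /d /det2; field.
    have e2 : a * z.1 + b * z.2 = (det2 p z + det2 z q) / D by rewrite /a /b /det2; field.
    rewrite e1 e2 => -[h1 [h2 h3]].
    rewrite pmulr_lge0 ?invr_gt0 // in h1.
    rewrite ltr_pM2r ?invr_gt0 // in h2.
    rewrite ler_pdivrMr // mul1r in h3.
    rewrite /tri /= -/D; split; [|split]; lra.
have hn : a * d - b * c != 0 by rewrite hD div1r invr_neq0.
have := @lin_area R a b c d A0 hn mA0.
rewrite -e areaA0 hD.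
have : (0 <= area (tri p q))%E by apply: measure_ge0.
case: (area (tri p q)) => [r| |] //= _.
  rewrite -EFinM => /eqP; rewrite eqe => /eqP h; congr (_%:E).
  rewrite ger0_norm in h; last by rewrite div1r invr_ge0 ltW.
  have : r = D * ((1 / D) * r) by field.
  by rewrite h => ->; field.
by rewrite mulry gtr0_sg ?normr_gt0 ?div1r ?invr_neq0 // mul1e.
Qed.
End S6.


Section S7.
Context {R : realType}.
Local Notation M2 := (measurableTypeR R * measurableTypeR R)%type.
Implicit Types p q r g m : R * R.

Definition negp (p : R * R) : R * R := (- p.1, - p.2).
Definition cone (p q : R * R) : set M2 := [set z | 0 <= det2 p z /\ 0 < det2 z q].
Definition sector (p g q : R * R) : set M2 := tri p g `|` tri g q.

Lemma mtri p q : measurable (tri p q).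
Proof.
have -> : tri p q = [set z : M2 | p.2 * z.1 + (- p.1) * z.2 <= 0] `&`
  ([set z : M2 | (- q.2) * z.1 + q.1 * z.2 < 0] `&`
   [set z : M2 | (q.2 - p.2) * z.1 + (p.1 - q.1) * z.2 <= det2 p q]).
  apply/seteqP; split => z; rewrite /tri /det2 /=.
    move=> [h1 [h2 h3]]; split; [|split]; lra.
  move=> [h1 [h2 h3]]; split; [|split]; lra.
by apply: measurableI; [exact: mhalf_le | apply: measurableI; [exact: mhalf_lt | exact: mhalf_le]].
Qed.

Lemma msector p g q : measurable (sector p g q).
Proof. by apply: measurableU; exact: mtri. Qed.

Lemma area_tri' p q : 0 <= det2 p q -> area (tri p q) = (det2 p q / 2)%:E.
Proof.
rewrite le_eqVlt => /orP[/eqP e|h]; last exact: area_tri.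
rewrite tri_empty; last by rewrite -e.
by rewrite -e mul0r /area measure0.
Qed.

Lemma tri_pos p q z : tri p q z -> 0 < det2 p q.
Proof. rewrite /tri /= => -[h1 [h2 h3]]; lra. Qed.

Lemma tri_disj p g q : tri p g `&` tri g q = set0.
Proof.
apply/seteqP; split => z //=; rewrite /tri /det2 /= => -[[h1 [h2 h3]] [g1 [g2 g3]]].
exfalso; lra.
Qed.

Lemma area_sector p g q M : 0 < M -> det2 p g = det2 p q / M -> det2 g q = det2 p q / M ->
  0 <= det2 p q -> area (sector p g q) = (det2 p q / M)%:E.
Proof.
move=> M0 e1 e2 h.
have h' : 0 <= det2 p q / M by apply: divr_ge0 => //; exact: ltW.
rewrite /sector areaU ?tri_disj //; try exact: mtri.
rewrite !area_tri' ?e1 ?e2 // -EFinD; congr (_%:E); field.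
by rewrite gt_eqF.
Qed.

Lemma sector_cone p g q M : 0 < M -> det2 p g = det2 p q / M -> det2 g q = det2 p q / M ->
  0 <= det2 p q -> sector p g q `<=` cone p q.
Proof.
move=> M0 e1 e2 h z Sz.
have Dpos : 0 < det2 p q.
  have H : 0 < det2 p g \/ 0 < det2 g q by case: Sz => /tri_pos; [left|right].
  rewrite lt_neqAle h andbT; apply/negP => /eqP E.
  by rewrite e1 e2 -E mul0r ltxx in H; case: H.
have pg : 0 < det2 p g by rewrite e1 divr_gt0.
have gq : 0 < det2 g q by rewrite e2 divr_gt0.
case: Sz; rewrite /tri /cone /= => -[h1 [h2 h3]].
- split => //.
  have key : det2 z q * det2 p g = det2 z g * det2 p q + det2 p z * det2 g q.
    by rewrite /det2; ring.
  have : 0 < det2 z q * det2 p g.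
    rewrite key; apply: ltr_pwDl; [exact: mulr_gt0 | apply: mulr_ge0 => //; exact: ltW].
  by rewrite pmulr_lgt0.
- split => //.
  have key : det2 p z * det2 g q = det2 z q * det2 p g + det2 g z * det2 p q.
    by rewrite /det2; ring.
  have : 0 <= det2 p z * det2 g q.
    by rewrite key; apply: addr_ge0; apply: mulr_ge0 => //; apply: ltW.
  by rewrite pmulr_lge0.
Qed.

Lemma cone_adj p q r : cone p q `&` cone q r = set0.
Proof.
apply/seteqP; split => z //=; rewrite /cone /det2 /= => -[[h1 h2] [g1 g2]].
exfalso; lra.
Qed.

Lemma cone_opp p q p' q' : p' = negp p -> q' = negp q -> cone p q `&` cone p' q' = set0.
Proof.
move=> -> ->; apply/seteqP; split => z //=; rewrite /cone /det2 /= => -[[h1 h2] [g1 g2]].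
exfalso; lra.
Qed.

Lemma cone_dist2 p q r m : m = negp p -> 0 <= det2 p q -> 0 <= det2 q r -> 0 < det2 p r ->
  cone p q `&` cone r m = set0.
Proof.
move=> -> pq qr pr; apply/seteqP; split => z //=; rewrite /cone => -[[h1 h2] [g1 g2]].
have key : det2 z q * det2 p r = det2 q r * det2 z p + det2 p q * det2 z r.
  by rewrite /det2; ring.
have e1 : det2 z p = - det2 z (negp p) by rewrite /det2 /negp /=; ring.
have e2 : det2 z r = - det2 r z by rewrite /det2; ring.
have : 0 < det2 z q * det2 p r by apply: mulr_gt0.
rewrite key e1 e2; nra.
Qed.

End S7.


Section S8.
Context {R : realType}.
Local Notation M2 := (measurableTypeR R * measurableTypeR R)%type.
Variables (n : nat) (v : 'I_n -> R * R).

Lemma vin k : conv_hull v (v k).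
Proof.
exists (fun i => (i == k)%:R); split.
- by move=> i; rewrite ler0n.
- by rewrite (bigD1 k) //= eqxx big1 ?addr0 // => i /negbTE ->.
- rewrite (bigD1 k) //= eqxx mul1r big1 ?addr0; last by move=> i /negbTE ->; rewrite mul0r.
  rewrite (bigD1 k) //= eqxx mul1r big1 ?addr0; last by move=> i /negbTE ->; rewrite mul0r.
  by case: (v k).
Qed.

Lemma polarE (z : R * R) : polar (conv_hull v) z <-> forall k, dot2 (v k) z <= 1.
Proof.
split; first by move=> h k; apply: h; exact: vin.
move=> h y [l [l0 l1 ->]]; rewrite /dot2 /= !mulr_suml -big_split /=.
rewrite -l1; apply: ler_sum => i _.
have := h i; rewrite /dot2 => hi.
rewrite -!mulrA -mulrDr; rewrite -{2}(mulr1 (l i)); exact: ler_wpM2l.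
Qed.

Lemma mpolar : measurable (polar (conv_hull v) : set M2).
Proof.
have -> : (polar (conv_hull v) : set M2) =
    \bigcap_(k in [set: 'I_n]) [set z : M2 | (v k).1 * z.1 + (v k).2 * z.2 <= 1].
  apply/seteqP; split => z.
    by move=> /polarE h k _; exact: h.
  by move=> h; apply/polarE => k; exact: (h k).
apply: fin_bigcap_measurable; first exact: finite_finset.
by move=> k _; exact: mhalf_le.
Qed.

End S8.


Section S9.
Context {R : realType}.
Local Notation M2 := (measurableTypeR R * measurableTypeR R)%type.
Implicit Types p q r g m : R * R.

Definition goodsec p g q := exists M : R,
  [/\ 0 < M, det2 p g = det2 p q / M, det2 g q = det2 p q / M & 0 <= det2 p q].

Lemma sector_empty p g q : goodsec p g q -> det2 p q = 0 -> sector p g q = set0.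
Proof.
move=> [M [M0 e1 e2 _]] e; rewrite /sector !tri_empty ?setU0 //.
  by rewrite e2 e mul0r.
by rewrite e1 e mul0r.
Qed.

Lemma goodsec_cone p g q : goodsec p g q -> sector p g q `<=` cone p q.
Proof. by move=> [M [M0 e1 e2 h]]; exact: sector_cone e1 e2 h. Qed.

Lemma disj_adj p g q g' r : goodsec p g q -> goodsec q g' r ->
  sector p g q `&` sector q g' r = set0.
Proof.
move=> h1 h2; apply/seteqP; split => z //= [/(goodsec_cone h1) c1 /(goodsec_cone h2) c2].
by have := cone_adj p q r; move/seteqP => [/(_ z) H _]; apply: H.
Qed.

Lemma disj_opp p g q p' g' q' : goodsec p g q -> goodsec p' g' q' ->
  p' = negp p -> q' = negp q -> sector p g q `&` sector p' g' q' = set0.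
Proof.
move=> h1 h2 e1 e2; apply/seteqP; split => z //= [/(goodsec_cone h1) c1 /(goodsec_cone h2) c2].
by have := cone_opp e1 e2; move/seteqP => [/(_ z) H _]; apply: H.
Qed.

Lemma disj_d2 p g q r g' m : goodsec p g q -> goodsec r g' m -> m = negp p ->
  0 <= det2 q r -> det2 p r = det2 r m -> sector p g q `&` sector r g' m = set0.
Proof.
move=> h1 h2 em qr e.
have [h1'] := h1; case=> _ _ _ pq.
have [h2'] := h2; case=> _ _ _ rm.
move: rm; rewrite le_eqVlt => /orP[/eqP E|pr].
  by rewrite (sector_empty h2) ?E // setI0.
rewrite -e in pr.
apply/seteqP; split => z //= [/(goodsec_cone h1) c1 /(goodsec_cone h2) c2].
by have := cone_dist2 em pq qr pr; move/seteqP => [/(_ z) H _]; apply: H.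
Qed.

Lemma area_goodsec p g q M : 0 < M -> det2 p g = det2 p q / M -> det2 g q = det2 p q / M ->
  0 <= det2 p q -> area (sector p g q) = (det2 p q / M)%:E.
Proof. exact: area_sector. Qed.

Lemma setIU0 (A B C : set M2) : A `&` B = set0 -> A `&` C = set0 -> A `&` (B `|` C) = set0.
Proof. by move=> h1 h2; rewrite setIUr h1 h2 setU0. Qed.

End S9.


Section S10.
Context {R : realType}.
Local Notation M2 := (measurableTypeR R * measurableTypeR R)%type.
Implicit Types p q r g m : R * R.

Lemma negpK p : negp (negp p) = p.
Proof. by case: p => x y; rewrite /negp /= !opprK. Qed.

Lemma nesbitt (a b c : R) : 0 <= a -> 0 <= b -> 0 <= c -> 0 < a + c -> 0 < a + b -> 0 < b + c ->
  3 / 2 <= b / (a + c) + c / (a + b) + a / (b + c).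
Proof.
move=> a0 b0 c0 x0 y0 z0.
have key : b / (a + c) + c / (a + b) + a / (b + c) - 3 / 2 =
  (((b + c) - (a + c)) ^+ 2 / ((b + c) * (a + c)) + ((b + c) - (a + b)) ^+ 2 / ((b + c) * (a + b))
   + ((a + c) - (a + b)) ^+ 2 / ((a + c) * (a + b))) / 2.
  by field; rewrite ?gt_eqF.
rewrite -subr_ge0 key; apply: divr_ge0 => //.
by apply: addr_ge0; [apply: addr_ge0|]; apply: divr_ge0; rewrite ?sqr_ge0 // mulr_ge0 // ltW.
Qed.

Variables u1 u2 u3 : R * R.
Definition ca := det2 u1 u2.
Definition cb := det2 u2 u3.
Definition cc := det2 u1 u3.
Definition cM1 := ca + cc.
Definition cM2 := ca + cb.
Definition cM3 := cb + cc.
Definition h0 := negp (rot90 u2).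
Definition h1 := negp (rot90 u3).
Definition h2 := rot90 u1.
Definition h3 := rot90 u2.
Definition h4 := rot90 u3.
Definition h5 := negp (rot90 u1).
Definition g0 : R * R := ((u2.2 + u3.2) / cM1, - (u2.1 + u3.1) / cM1).
Definition g1 : R * R := (- (u1.2 - u3.2) / cM2, (u1.1 - u3.1) / cM2).
Definition g2 : R * R := (- (u1.2 + u2.2) / cM3, (u1.1 + u2.1) / cM3).
Definition g3 := negp g0.
Definition g4 := negp g1.
Definition g5 := negp g2.

Lemma config_area (K : set M2) : measurable K ->
  (forall p q, K p -> K q -> tri p q `<=` K) ->
  K h0 -> K h1 -> K h2 -> K h3 -> K h4 -> K h5 ->
  K g0 -> K g1 -> K g2 -> K g3 -> K g4 -> K g5 ->
  0 <= ca -> 0 <= cb -> 0 <= cc -> 0 < cM1 -> 0 < cM2 -> 0 < cM3 ->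
  (3%:E <= area K)%E.
Proof.
move=> mK Ktri Kh0 Kh1 Kh2 Kh3 Kh4 Kh5 Kg0 Kg1 Kg2 Kg3 Kg4 Kg5 a0 b0 c0 M10 M20 M30.
have n1 : cM1 != 0 by rewrite gt_eqF.
have n2 : cM2 != 0 by rewrite gt_eqF.
have n3 : cM3 != 0 by rewrite gt_eqF.
have d01 : det2 h0 h1 = cb by rewrite /h0 /h1 /cb /det2 /negp /rot90 /=; ring.
have d12 : det2 h1 h2 = cc by rewrite /h1 /h2 /cc /det2 /negp /rot90 /=; ring.
have d23 : det2 h2 h3 = ca by rewrite /h2 /h3 /ca /det2 /negp /rot90 /=; ring.
have d34 : det2 h3 h4 = cb by rewrite /h3 /h4 /cb /det2 /negp /rot90 /=; ring.
have d45 : det2 h4 h5 = cc by rewrite /h4 /h5 /cc /det2 /negp /rot90 /=; ring.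
have d50 : det2 h5 h0 = ca by rewrite /h5 /h0 /ca /det2 /negp /rot90 /=; ring.
have d02 : det2 h0 h2 = ca by rewrite /h0 /h2 /ca /det2 /negp /rot90 /=; ring.
have d13 : det2 h1 h3 = cb by rewrite /h1 /h3 /cb /det2 /negp /rot90 /=; ring.
have d24 : det2 h2 h4 = cc by rewrite /h2 /h4 /cc /det2 /negp /rot90 /=; ring.
have d35 : det2 h3 h5 = ca by rewrite /h3 /h5 /ca /det2 /negp /rot90 /=; ring.
have d40 : det2 h4 h0 = cb by rewrite /h4 /h0 /cb /det2 /negp /rot90 /=; ring.
have d51 : det2 h5 h1 = cc by rewrite /h5 /h1 /cc /det2 /negp /rot90 /=; ring.
have e0a : det2 h0 g0 = det2 h0 h1 / cM1.
  by rewrite d01 /h0 /g0 /cb /cM1 /ca /cc /det2 /negp /rot90 /=; field.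
have e0b : det2 g0 h1 = det2 h0 h1 / cM1.
  by rewrite d01 /h1 /g0 /cb /cM1 /ca /cc /det2 /negp /rot90 /=; field.
have e1a : det2 h1 g1 = det2 h1 h2 / cM2.
  by rewrite d12 /h1 /g1 /cM2 /ca /cb /cc /det2 /negp /rot90 /=; field.
have e1b : det2 g1 h2 = det2 h1 h2 / cM2.
  by rewrite d12 /h2 /g1 /cM2 /ca /cb /cc /det2 /negp /rot90 /=; field.
have e2a : det2 h2 g2 = det2 h2 h3 / cM3.
  by rewrite d23 /h2 /g2 /cM3 /ca /cb /cc /det2 /negp /rot90 /=; field.
have e2b : det2 g2 h3 = det2 h2 h3 / cM3.
  by rewrite d23 /h3 /g2 /cM3 /ca /cb /cc /det2 /negp /rot90 /=; field.
have e3a : det2 h3 g3 = det2 h3 h4 / cM1.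
  by rewrite d34 -d01 -e0a /h3 /g3 /h0 /det2 /negp /=; ring.
have e3b : det2 g3 h4 = det2 h3 h4 / cM1.
  by rewrite d34 -d01 -e0b /h4 /g3 /h1 /det2 /negp /=; ring.
have e4a : det2 h4 g4 = det2 h4 h5 / cM2.
  by rewrite d45 -d12 -e1a /h4 /g4 /h1 /det2 /negp /=; ring.
have e4b : det2 g4 h5 = det2 h4 h5 / cM2.
  by rewrite d45 -d12 -e1b /h5 /g4 /h2 /det2 /negp /=; ring.
have e5a : det2 h5 g5 = det2 h5 h0 / cM3.
  by rewrite d50 -d23 -e2a /h5 /g5 /h2 /det2 /negp /=; ring.
have e5b : det2 g5 h0 = det2 h5 h0 / cM3.
  by rewrite d50 -d23 -e2b /h0 /g5 /h3 /det2 /negp /=; ring.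
have gs0 : goodsec h0 g0 h1 by exists cM1; split => //; rewrite d01.
have gs1 : goodsec h1 g1 h2 by exists cM2; split => //; rewrite d12.
have gs2 : goodsec h2 g2 h3 by exists cM3; split => //; rewrite d23.
have gs3 : goodsec h3 g3 h4 by exists cM1; split => //; rewrite d34.
have gs4 : goodsec h4 g4 h5 by exists cM2; split => //; rewrite d45.
have gs5 : goodsec h5 g5 h0 by exists cM3; split => //; rewrite d50.
have A0 : area (sector h0 g0 h1) = (cb / cM1)%:E by rewrite (area_goodsec M10 e0a e0b) d01 // d01.
have A1 : area (sector h1 g1 h2) = (cc / cM2)%:E by rewrite (area_goodsec M20 e1a e1b) d12 // d12.
have A2 : area (sector h2 g2 h3) = (ca / cM3)%:E by rewrite (area_goodsec M30 e2a e2b) d23 // d23.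
have A3 : area (sector h3 g3 h4) = (cb / cM1)%:E by rewrite (area_goodsec M10 e3a e3b) d34 // d34.
have A4 : area (sector h4 g4 h5) = (cc / cM2)%:E by rewrite (area_goodsec M20 e4a e4b) d45 // d45.
have A5 : area (sector h5 g5 h0) = (ca / cM3)%:E by rewrite (area_goodsec M30 e5a e5b) d50 // d50.
have nh0 : h3 = negp h0 by rewrite negpK.
have nh1 : h4 = negp h1 by rewrite negpK.
have nh5 : h2 = negp h5 by rewrite negpK.
have D01 := disj_adj gs0 gs1.
have D02 := disj_d2 gs0 gs2 nh0 (ltac:(by rewrite d12)) (ltac:(by rewrite d02 d23)).
have D03 := disj_opp gs0 gs3 nh0 nh1.
have D04 : sector h0 g0 h1 `&` sector h4 g4 h5 = set0.
  by rewrite setIC; apply: disj_d2 gs4 gs0 _ _ _ => //; rewrite ?d50 ?d40 ?d01.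
have D05 : sector h0 g0 h1 `&` sector h5 g5 h0 = set0.
  by rewrite setIC; exact: disj_adj gs5 gs0.
have D12 := disj_adj gs1 gs2.
have D13 := disj_d2 gs1 gs3 nh1 (ltac:(by rewrite d23)) (ltac:(by rewrite d13 d34)).
have D14 := disj_opp gs1 gs4 nh1 (erefl h5).
have D15 : sector h1 g1 h2 `&` sector h5 g5 h0 = set0.
  by rewrite setIC; apply: disj_d2 gs5 gs1 _ _ _ => //; rewrite ?d01 ?d51 ?d12.
have D23 := disj_adj gs2 gs3.
have D24 := disj_d2 gs2 gs4 (erefl h5) (ltac:(by rewrite d34)) (ltac:(by rewrite d24 d45)).
have D25 := disj_opp gs2 gs5 (erefl h5) (erefl h0).
have D34 := disj_adj gs3 gs4.
have D35 := disj_d2 gs3 gs5 (erefl h0) (ltac:(by rewrite d45)) (ltac:(by rewrite d35 d50)).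
have D45 := disj_adj gs4 gs5.
set S0 := sector h0 g0 h1. set S1 := sector h1 g1 h2. set S2 := sector h2 g2 h3.
set S3 := sector h3 g3 h4. set S4 := sector h4 g4 h5. set S5 := sector h5 g5 h0.
have m0 : measurable S0 := msector _ _ _.
have m1 : measurable S1 := msector _ _ _.
have m2 : measurable S2 := msector _ _ _.
have m3 : measurable S3 := msector _ _ _.
have m4 : measurable S4 := msector _ _ _.
have m5 : measurable S5 := msector _ _ _.
have secK p g q : K p -> K g -> K q -> sector p g q `<=` K.
  by move=> Kp Kg Kq z [/Ktri|/Ktri]; [apply|apply].
have WK : S0 `|` (S1 `|` (S2 `|` (S3 `|` (S4 `|` S5)))) `<=` K.
  move=> z [H|[H|[H|[H|[H|H]]]]].
  - exact: (secK _ _ _ Kh0 Kg0 Kh1 z H).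
  - exact: (secK _ _ _ Kh1 Kg1 Kh2 z H).
  - exact: (secK _ _ _ Kh2 Kg2 Kh3 z H).
  - exact: (secK _ _ _ Kh3 Kg3 Kh4 z H).
  - exact: (secK _ _ _ Kh4 Kg4 Kh5 z H).
  - exact: (secK _ _ _ Kh5 Kg5 Kh0 z H).
have mW : measurable (S0 `|` (S1 `|` (S2 `|` (S3 `|` (S4 `|` S5))))).
  apply: measurableU => //; apply: measurableU => //; apply: measurableU => //.
  by apply: measurableU => //; apply: measurableU.
apply: le_trans (area_le mW mK WK).
rewrite areaU //; last by do 4 apply: setIU0 => //.
rewrite areaU //; last by do 3 apply: setIU0 => //.
rewrite areaU //; last by do 2 apply: setIU0 => //.
rewrite areaU //; last by apply: setIU0 => //.
rewrite areaU //.
rewrite A0 A1 A2 A3 A4 A5 -!EFinD lee_fin.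
have := nesbitt a0 b0 c0 M10 M20 M30.
rewrite /cM1 /cM2 /cM3; lra.
- by apply: measurableU.
- by apply: measurableU => //; apply: measurableU.
- by apply: measurableU => //; apply: measurableU => //; apply: measurableU.
- by apply: measurableU => //; apply: measurableU => //; apply: measurableU => //; apply: measurableU.
Qed.
End S10.


Section S11.
Context {R : realType}.
Local Notation M2 := (measurableTypeR R * measurableTypeR R)%type.
Implicit Types p q r g m : R * R.

Lemma tri_dot y p q z : dot2 y p <= 1 -> dot2 y q <= 1 -> tri p q z -> dot2 y z <= 1.
Proof.
move=> hp hq Tz; have D0 := tri_pos Tz.
move: Tz; rewrite /tri /= => -[h1 [h2 h3]].
have key : dot2 y z * det2 p q = det2 z q * dot2 y p + det2 p z * dot2 y q.
  by rewrite /dot2 /det2; ring.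
have k1 : det2 z q * dot2 y p <= det2 z q by rewrite -{2}(mulr1 (det2 z q)) ler_wpM2l // ltW.
have k2 : det2 p z * dot2 y q <= det2 p z by rewrite -{2}(mulr1 (det2 p z)) ler_wpM2l.
have : dot2 y z * det2 p q <= 1 * det2 p q by rewrite key mul1r; lra.
by rewrite ler_pM2r.
Qed.

Definition Fd p q r := det2 p q + det2 q r + det2 p r.

Lemma ex_max (T : finType) (t0 : T) (F : T -> R) : exists t, forall s, F s <= F t.
Proof.
case: (@arg_maxP _ R T t0 xpredT F isT) => t _ H.
by exists t => s; apply: H.
Qed.

End S11.

Theorem lemma4 (R : realType) (Q : set (R * R)) :
  convex_polygon Q ->
  rot90 @` Q `<=` polar Q ->
  (3%:E <= area (polar Q))%E.
Proof.
move=> [n [v [-> [i [j [k hnd]]]]]] ht.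
have hdet x y : det2 (v x) (v y) <= 1.
  have := ht (rot90 (v x)) (ex_intro2 _ _ (v x) (vin v x) erefl).
  move=> /polarE /(_ y); rewrite /dot2 /det2 /rot90 /=; lra.
pose I := ('I_n * bool)%type.
pose w (s : I) := if s.2 then v s.1 else negp (v s.1).
have wdet s t : det2 (w s) (w t) <= 1.
  have h1 := hdet s.1 t.1; have h2 := hdet t.1 s.1.
  rewrite /w; case: s.2; case: t.2; move: h1 h2; rewrite /det2 /negp /=; lra.
have wflip s : w (s.1, ~~ s.2) = negp (w s).
  by rewrite /w /=; case: s.2 => //=; rewrite negpK.
pose F (t : I * I * I) := Fd (w t.1.1) (w t.1.2) (w t.2).
have [topt Hmax] := ex_max ((i, true), (i, true), (i, true)) F.
have H1 s : Fd (w s) (w topt.1.2) (w topt.2) <= Fd (w topt.1.1) (w topt.1.2) (w topt.2).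
  exact: (Hmax ((s, topt.1.2), topt.2)).
have H2 s : Fd (w topt.1.1) (w s) (w topt.2) <= Fd (w topt.1.1) (w topt.1.2) (w topt.2).
  exact: (Hmax ((topt.1.1, s), topt.2)).
have H3 s : Fd (w topt.1.1) (w topt.1.2) (w s) <= Fd (w topt.1.1) (w topt.1.2) (w topt.2).
  exact: (Hmax ((topt.1.1, topt.1.2), s)).
have Fpos : 0 < Fd (w topt.1.1) (w topt.1.2) (w topt.2).
  have [x [y dxy]] : exists x y, det2 (v x) (v y) != 0.
    have e : det2 ((v j).1 - (v i).1, (v j).2 - (v i).2) ((v k).1 - (v i).1, (v k).2 - (v i).2)
      = det2 (v i) (v j) + det2 (v j) (v k) + det2 (v k) (v i) by rewrite /det2 /=; ring.
    rewrite e in hnd.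
    have [e1|e1] := eqVneq (det2 (v i) (v j)) 0; last by exists i, j.
    have [e2|e2] := eqVneq (det2 (v j) (v k)) 0; last by exists j, k.
    have [e3|e3] := eqVneq (det2 (v k) (v i)) 0; last by exists k, i.
    by move: hnd; rewrite e1 e2 e3 !addr0 eqxx.
  apply: (lt_le_trans _ (Hmax ((x, true), (y, 0 < det2 (v x) (v y)), (y, 0 < det2 (v x) (v y))))).
  rewrite /F /Fd /w /=.
  case: ifP => hp.
    by rewrite /det2 /=; rewrite /det2 in hp; nra.
  move/negbT: hp; rewrite -leNgt => hp.
  have hn : det2 (v x) (v y) < 0 by rewrite lt_neqAle dxy hp.
  by rewrite /det2 /negp /=; rewrite /det2 in hn; nra.
set u1 := w topt.1.1 in H1 H2 H3 Fpos *.
set u2 := w topt.1.2 in H1 H2 H3 Fpos *.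
set u3 := w topt.2 in H1 H2 H3 Fpos *.
have t1 : 2 * cb u2 u3 <= Fd u1 u2 u3.
  by have := H1 topt.1.2; rewrite -/u2 /Fd /cb /det2 /=; lra.
have t2 : 2 * cc u1 u3 <= Fd u1 u2 u3.
  by have := H2 topt.1.1; rewrite -/u1 /Fd /cc /det2 /=; lra.
have t3 : 2 * ca u1 u2 <= Fd u1 u2 u3.
  have := H3 (topt.1.1.1, ~~ topt.1.1.2); rewrite wflip -/u1 /Fd /ca /det2 /negp /=; lra.
have eF : Fd u1 u2 u3 = ca u1 u2 + cb u2 u3 + cc u1 u3 by rewrite /Fd /ca /cb /cc.
rewrite eF in t1 t2 t3 Fpos.
have a0 : 0 <= ca u1 u2 by lra.
have b0 : 0 <= cb u2 u3 by lra.
have c0 : 0 <= cc u1 u3 by lra.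
have M10 : 0 < cM1 u1 u2 u3 by rewrite /cM1; lra.
have M20 : 0 < cM2 u1 u2 u3 by rewrite /cM2; lra.
have M30 : 0 < cM3 u1 u2 u3 by rewrite /cM3; lra.
pose K : set (measurableTypeR R * measurableTypeR R) := polar (conv_hull v).
have Kmem z : (forall s : I, dot2 (w s) z <= 1) -> K z.
  by move=> h; apply/polarE => kk; exact: (h (kk, true)).
have Kneg z : (forall s : I, dot2 (w s) z <= 1) -> forall s : I, dot2 (w s) (negp z) <= 1.
  move=> h s; have := h (s.1, ~~ s.2); rewrite wflip /dot2 /negp /=; lra.
have Kt1 s : dot2 (w s) (rot90 u1) <= 1.
  by have := wdet topt.1.1 s; rewrite -/u1 /dot2 /det2 /rot90 /=; lra.
have Kt2 s : dot2 (w s) (rot90 u2) <= 1.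
  by have := wdet topt.1.2 s; rewrite -/u2 /dot2 /det2 /rot90 /=; lra.
have Kt3 s : dot2 (w s) (rot90 u3) <= 1.
  by have := wdet topt.2 s; rewrite -/u3 /dot2 /det2 /rot90 /=; lra.
have Kg0 s : dot2 (w s) (g0 u1 u2 u3) <= 1.
  have := H1 s; rewrite eF => h.
  have e : dot2 (w s) (g0 u1 u2 u3) = (det2 (w s) u2 + det2 (w s) u3) / cM1 u1 u2 u3.
    by rewrite /g0 /dot2 /det2 /=; field; rewrite gt_eqF.
  rewrite e ler_pdivrMr // mul1r; move: h; rewrite /Fd /cM1 /ca /cb /cc; lra.
have Kg1 s : dot2 (w s) (g1 u1 u2 u3) <= 1.
  have := H2 s; rewrite eF => h.
  have e : dot2 (w s) (g1 u1 u2 u3) = (det2 u1 (w s) + det2 (w s) u3) / cM2 u1 u2 u3.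
    by rewrite /g1 /dot2 /det2 /=; field; rewrite gt_eqF.
  rewrite e ler_pdivrMr // mul1r; move: h; rewrite /Fd /cM2 /ca /cb /cc; lra.
have Kg2 s : dot2 (w s) (g2 u1 u2 u3) <= 1.
  have := H3 s; rewrite eF => h.
  have e : dot2 (w s) (g2 u1 u2 u3) = (det2 u1 (w s) + det2 u2 (w s)) / cM3 u1 u2 u3.
    by rewrite /g2 /dot2 /det2 /=; field; rewrite gt_eqF.
  rewrite e ler_pdivrMr // mul1r; move: h; rewrite /Fd /cM3 /ca /cb /cc; lra.
have Ktri p q : K p -> K q -> tri p q `<=` K.
  move=> /polarE Kp /polarE Kq z Tz; apply/polarE => kk.
  exact: tri_dot (Kp kk) (Kq kk) Tz.
apply: (@config_area R u1 u2 u3 K (mpolar v) Ktri).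
all: try exact: a0.
all: try exact: b0.
all: try exact: c0.
all: try exact: M10.
all: try exact: M20.
all: try exact: M30.
- by apply: Kmem; apply: Kneg.
- by apply: Kmem; apply: Kneg.
- by apply: Kmem.
- by apply: Kmem.
- by apply: Kmem.
- by apply: Kmem; apply: Kneg.
- by apply: Kmem.
- by apply: Kmem.
- by apply: Kmem.
- by apply: Kmem; apply: Kneg.
- by apply: Kmem; apply: Kneg.
- by apply: Kmem; apply: Kneg.
Qed.
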